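(* Let $W(T,Y)$ be a $W$-product of a semilattice $Y$ by a monoid $T$. Then $W(T,Y)$ is an $F$-restriction semigroup if and only if $Y$ has an identity (greatest element), if and only if $W(T,Y)$ is a monoid.
   Context: $W$-product: $T$ is a monoid acting on the left on the semilattice $Y$ (written $t*y$) by order-embeddings such that each range $t*Y$ is an order ideal of $Y$; $W(T,Y)=\{(t*y,t)\colon y\in Y,t\in T\}$ with $(t*y,t)(s*x,s)=(t*y\wedge(ts)*x,ts)$, $(t*y,t)^*=(y,1)$, $(t*y,t)^+=(t*y,1)$. It is a restriction semigroup (an algebra $(S,\cdot,{}^*,{}^+)$ satisfying $xx^*=x$, $x^*y^*=y^*x^*$, $(xy^* )^*=x^*y^*$, $x^*y=y(xy)^*$ and the duals for ${}^+$, $(x^+)^*=x^+$, $(x^* )^+=x^*$). A restriction semigroup is $F$-restriction if every class of the least congruence $\sigma$ identifying all projections $x^*$ has a maximum element in the natural partial order ($a\le b$ iff $a=eb$ for some projection $e$). *)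

(* Defs.v *)
From HB Require Import structures.
From mathcomp Require Import all_boot all_order.
Set Implicit Arguments. Unset Strict Implicit. Unset Printing Implicit Defensive.
Import Order.Theory.
Local Open Scope order_scope.

(** * Generic notions for a semigroup given as a subset [P] of a type [S]
    closed under [mul], with its set of projections [proj]
    (the projections of a restriction semigroup are the elements x^* ). *)

Definition natural_le (S : Type) (mul : S -> S -> S) (proj : S -> Prop) (a b : S) :=
  exists e, proj e /\ a = mul e b.

Definition is_congruence (S : Type) (P : S -> Prop) (mul : S -> S -> S)
    (R : S -> S -> Prop) :=
  [/\ forall a b, R a b -> P a /\ P b,
      forall a, P a -> R a a,
      forall a b, R a b -> R b a,
      forall a b c, R a b -> R b c -> R a c
    & forall a b c d, R a b -> R c d -> R (mul a c) (mul b d)].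

Definition sigma (S : Type) (P : S -> Prop) (mul : S -> S -> S) (proj : S -> Prop)
    (a b : S) :=
  forall R, is_congruence P mul R ->
    (forall e f, proj e -> proj f -> R e f) -> R a b.

Definition F_restriction (S : Type) (P : S -> Prop) (mul : S -> S -> S)
    (proj : S -> Prop) :=
  forall a, P a -> exists m, [/\ P m, sigma P mul proj a m &
    forall b, P b -> sigma P mul proj a b -> natural_le mul proj b m].

Definition is_monoid_on (S : Type) (P : S -> Prop) (mul : S -> S -> S) :=
  exists e, P e /\ forall a, P a -> mul e a = a /\ mul a e = a.

Definition is_monoid (T : Type) (mul : T -> T -> T) (one : T) :=
  [/\ associative mul, left_id one mul & right_id one mul].

Definition W_action (d : Order.disp_t) (Y : meetSemilatticeType d) (T : Type)
    (mul : T -> T -> T) (one : T) (act : T -> Y -> Y) :=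
  [/\ forall y, act one y = y,
      forall t s y, act (mul t s) y = act t (act s y),
      forall t y z, (act t y <= act t z) = (y <= z)
    & forall t y z, z <= act t y -> exists x, z = act t x].

(** Carrier of W(T,Y): pairs (t*y, t). *)
Definition W_carrier (d : Order.disp_t) (Y : meetSemilatticeType d) (T : Type)
    (act : T -> Y -> Y) (p : Y * T) :=
  exists y, p = (act p.2 y, p.2).

(** Product (t*y,t)(s*x,s) = (t*y /\ (ts)*x, ts); note (ts)*x = t*(s*x). *)
Definition W_mul (d : Order.disp_t) (Y : meetSemilatticeType d) (T : Type)
    (mul : T -> T -> T) (act : T -> Y -> Y) (p q : Y * T) : Y * T :=
  (p.1 `&` act p.2 q.1, mul p.2 q.2).

(** Projections of W(T,Y): the elements (t*y,t)^* = (y,1). *)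
Definition W_proj (d : Order.disp_t) (Y : meetSemilatticeType d) (T : Type)
    (one : T) (act : T -> Y -> Y) (e : Y * T) :=
  exists t y, e = (y, one) /\ W_carrier act (act t y, t).

Definition has_top (d : Order.disp_t) (Y : meetSemilatticeType d) :=
  exists e : Y, forall y, y <= e.

(* Main.v *)
Require Import Defs.
From mathcomp Require Import all_boot all_order.
Import Order.Theory.
Local Open Scope order_scope.

Section W.
Variables (d : Order.disp_t) (Y : meetSemilatticeType d)
    (T : Type) (mul : T -> T -> T) (one : T) (act : T -> Y -> Y)
    (HT : is_monoid mul one) (Hact : W_action mul one act).

Lemma Wclos p q : W_carrier act p -> W_carrier act q ->
  W_carrier act (W_mul mul act p q).
Proof.
case: Hact => a1 aM aE aI.
case: p => a t [y /= ->]; case: q => b s [x /= ->].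
rewrite /W_mul /=.
have := aI (mul t s) x (act t y `&` act t (act s x)).
rewrite aM => /(_ (leIr _ _)) [z ->].
by exists z; rewrite /= aM.
Qed.

Definition Rt (p q : Y * T) :=
  W_carrier act p /\ W_carrier act q /\ p.2 = q.2.

Lemma Rt_cong : is_congruence (W_carrier act) (W_mul mul act) Rt.
Proof.
split.
- by move=> a b [? [? _]].
- by move=> a Pa.
- by move=> a b [? [? ?]].
- by move=> a b c [? [? e1]] [? [? e2]]; split=> //; split=> //; rewrite e1.
- move=> a b c e [Pa [Pb e1]] [Pc [Pe e2]]; split; first exact: Wclos.
  split; first exact: Wclos.
  by rewrite /W_mul /= e1 e2.
Qed.

Lemma proj_car y : W_carrier act (y, one).
Proof. by case: Hact => a1 _ _ _; exists y; rewrite /= a1. Qed.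

Lemma proj_in y : W_proj one act (y, one).
Proof. by exists one, y; split=> //; exists y. Qed.

Lemma sigma_snd a b : sigma (W_carrier act) (W_mul mul act) (W_proj one act) a b ->
  a.2 = b.2.
Proof.
move=> H; have := H Rt Rt_cong.
case=> [e f [t [y [-> _]]] [s [z [-> _]]]|_ [_ //]].
by split; [exact: proj_car|split; [exact: proj_car|]].
Qed.

End W.
Arguments proj_car {d Y T mul one act} Hact y.
Arguments proj_in {d Y T one act} y.
Arguments sigma_snd {d Y T mul one act} Hact {a b}.

Theorem corollary3p6 (d : Order.disp_t) (Y : meetSemilatticeType d) (y0 : Y)
    (T : Type) (mul : T -> T -> T) (one : T) (act : T -> Y -> Y)
    (HT : is_monoid mul one) (Hact : W_action mul one act) :
  (F_restriction (W_carrier act) (W_mul mul act) (W_proj one act) <-> has_top Y) /\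
  (has_top Y <-> is_monoid_on (W_carrier act) (W_mul mul act)).
Proof.
have Hact' := Hact; case: Hact' => a1 aM aE aI.
case: HT => mA m1l m1r.
split; split.
- move=> F.
  have [m [Pm sm Hm]] := F (y0, one) (proj_car Hact y0).
  have m2 := sigma_snd Hact sm; rewrite /= in m2.
  case: m Pm sm Hm m2 => w u Pm sm Hm /= m2; subst u.
  exists w => y.
  have := Hm (y, one) (proj_car Hact y).
  case.
    move=> R HR Hp; apply: Hp; exact: proj_in.
  move=> f [[t [z [-> _]]] ]; rewrite /W_mul /= a1 => -[-> _].
  exact: leIr.
- case=> e He [p t] [y /= Ep]; case: Ep => ->.
  exists (act t e, t); split.
  + by exists e.
  + move=> R HR Hp.
    case: (HR) => _ Rr _ _ Rm.
    have Pm : W_carrier act (act t e, t) by exists e.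
    have := Rm (act t y, one) (e, one) _ _ (Hp _ _ (proj_in _) (proj_in _)) (Rr _ Pm).
    rewrite /W_mul /= a1 (meet_r (He _)) meet_l //.
    by rewrite m1l.
    by move: (aE t y e); rewrite He => ->.
  + move=> [b s] [z /= Eb] sab; case: Eb => ->.
    have := sigma_snd Hact sab; rewrite /= => <-.
    exists (act t z, one); split; first exact: proj_in.
    rewrite /W_mul /= a1 m1l meet_l //.
    by move: (aE t z e); rewrite He => ->.
- case=> e He; exists (e, one); split; first exact: proj_car.
  move=> [a t] [y /= Ea]; case: Ea => ->.
  rewrite /W_mul /= a1 m1l m1r meet_r ?He // meet_l //.
  by move: (aE t y e); rewrite He => ->.
- case=> -[a u] [Pe He]; exists a => y.
  have := He (y, one) (proj_car Hact y) => -[_ +].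
  rewrite /W_mul /= a1 => -[<- _]; exact: leIr.
Qed.
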